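(* For every $n\ge1$ there is a one-to-one correspondence between the set of linked partitions of $[n]$ and the set of increasing trees on the $n+1$ labeled vertices $0,1,\dots,n$.
   Context: Two finite sets of integers $E,F$ are nearly disjoint if for every $i\in E\cap F$ either ($i=\min(E)$, $|E|>1$, $i\ne\min(F)$) or ($i=\min(F)$, $|F|>1$, $i\ne\min(E)$). A linked partition of $[n]$ is a set of nonempty subsets (blocks) of $[n]$ with union $[n]$, any two distinct blocks nearly disjoint (no noncrossing condition). An increasing tree on vertices $0,1,\dots,n$ is a tree rooted at $0$ in which every child has a larger label than its parent. *)

(* Defs.v *)
From mathcomp Require Import all_boot.
Set Implicit Arguments. Unset Strict Implicit. Unset Printing Implicit Defensive.

(* The ground set [n] = {1,...,n} is represented inside 'I_n.+1 = {0,...,n}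
   as the elements i with 0 < i; vertex set of trees is all of 'I_n.+1. *)
Definition ground (n : nat) : {set 'I_n.+1} := [set i : 'I_n.+1 | 0 < i].

Definition is_min (m : nat) (E : {set 'I_m}) (i : 'I_m) : bool :=
  (i \in E) && [forall j in E, i <= j].

Definition nearly_disjoint (m : nat) (E F : {set 'I_m}) : bool :=
  [forall i in E :&: F,
     (is_min E i && (1 < #|E|) && ~~ is_min F i)
  || (is_min F i && (1 < #|F|) && ~~ is_min E i)].

Definition linked_partition (n : nat) (P : {set {set 'I_n.+1}}) : Prop :=
  [/\ forall B, B \in P -> B != set0 /\ B \subset ground n,
      \bigcup_(B in P) B = ground n &
      forall B C, B \in P -> C \in P -> B != C -> nearly_disjoint B C].

Definition adj (n : nat) (E : {set {set 'I_n.+1}}) : rel 'I_n.+1 :=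
  fun x y => (x != y) && ([set x; y] \in E).

Definition is_tree (n : nat) (E : {set {set 'I_n.+1}}) : Prop :=
  [/\ forall e, e \in E -> #|e| = 2,
      forall x y, connect (adj E) x y
    & ~ exists c : seq 'I_n.+1,
          [/\ uniq c, 3 <= size c & cycle (adj E) c]].

(* Rooted at 0, every child has a larger label than its parent:
   equivalently stated as: along every simple path starting at the root 0
   the labels increase (the parent of v is its predecessor on the unique
   simple path from 0 to v). *)
Definition increasing_tree (n : nat) (E : {set {set 'I_n.+1}}) : Prop :=
  is_tree E /\
  forall p : seq 'I_n.+1, path (adj E) ord0 p -> uniq (ord0 :: p) ->
    sorted (fun a b : 'I_n.+1 => a < b) (ord0 :: p).

(* Main.v *)
Require Import Defs.
From mathcomp Require Import all_boot.
From mathcomp Require Import zify.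
From Stdlib Require Import ProofIrrelevance.
Set Implicit Arguments. Unset Strict Implicit. Unset Printing Implicit Defensive.

Lemma ordneq0 n (v : 'I_n.+1) : (v != ord0) = (0 < v).
Proof. by case: v => [[|m] H]. Qed.

Lemma set2_eq (T : finType) (x y a b : T) :
  [set x; y] = [set a; b] -> (x = a /\ y = b) \/ (x = b /\ y = a).
Proof.
move=> E.
have xa: x \in [set a; b] by rewrite -E set21.
have ya: y \in [set a; b] by rewrite -E set22.
have ax: a \in [set x; y] by rewrite E set21.
have bx: b \in [set x; y] by rewrite E set22.
move: xa ya ax bx; rewrite !in_set2.

case/orP=> /eqP ?; case/orP=> /eqP ?; case/orP=> /eqP ?; case/orP=> /eqP ?.
all: subst.

all: (left; split; reflexivity) || (right; split; reflexivity).
Qed.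

Definition pok n (f : {ffun 'I_n.+1 -> 'I_n.+1}) :=
  [forall v, if v == ord0 then f v == ord0 else f v < v].

Lemma pok0 n (f : {ffun 'I_n.+1 -> 'I_n.+1}) : pok f -> f ord0 = ord0.
Proof. by move=> /forallP /(_ ord0); rewrite eqxx => /eqP. Qed.

Lemma pokS n (f : {ffun 'I_n.+1 -> 'I_n.+1}) v : pok f -> v != ord0 -> f v < v.
Proof. by move=> /forallP /(_ v) H /negbTE E; rewrite E in H. Qed.

Lemma in_ground n (v : 'I_n.+1) : (v \in ground n) = (v != ord0).
Proof. by rewrite /ground inE ordneq0. Qed.

Definition treeE n (f : {ffun 'I_n.+1 -> 'I_n.+1}) : {set {set 'I_n.+1}} :=
  [set [set v; f v] | v in ground n].

Lemma adjT n (f : {ffun 'I_n.+1 -> 'I_n.+1}) x y : pok f ->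
  adj (treeE f) x y = ((x != ord0) && (y == f x)) || ((y != ord0) && (x == f y)).
Proof.
move=> pf; rewrite /adj; apply/andP/orP.
- case=> xy /imsetP [v]; rewrite in_ground => v0 E.
  case: (set2_eq E) => [[-> ->]|[-> ->]]; first by left; rewrite v0 eqxx.
  by right; rewrite v0 eqxx.
- case=> [/andP [x0 /eqP ->] | /andP [y0 /eqP ->]].
    have lt := pokS pf x0; split.
      by apply/eqP => E; move: lt; rewrite -E ltnn.
    by apply/imsetP; exists x; [rewrite in_ground | ].
  have lt := pokS pf y0; split.
    by apply/eqP => E; move: lt; rewrite E ltnn.
  by apply/imsetP; exists y; [rewrite in_ground | rewrite setUC].
Qed.

Lemma adj_sym n (E : {set {set 'I_n.+1}}) : symmetric (adj E).
Proof. by move=> x y; rewrite /adj eq_sym setUC. Qed.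

Lemma connT n (f : {ffun 'I_n.+1 -> 'I_n.+1}) v : pok f ->
  connect (adj (treeE f)) ord0 v.
Proof.
move=> pf; have [k] := ubnP v; elim: k v => // k IH v kv.
case: (eqVneq v ord0) => [->|v0]; first exact: connect0.
have lt := pokS pf v0.
apply: (connect_trans (IH (f v) _)); first by apply: leq_trans lt _.
by apply: connect1; rewrite adjT // v0 eqxx orbT.
Qed.

Lemma max_in n (s : seq 'I_n.+1) x0 : x0 \in s ->
  exists2 m, m \in s & forall x, x \in s -> x <= m.
Proof.
elim: s x0 => // a s IH x0 _.
case: s IH => [|b s] IH.
  by exists a => [|x]; rewrite ?mem_seq1 // => /eqP ->.
have [m ms mmax] := IH b (mem_head b s).
case: (leqP a m) => am.
  exists m; first by rewrite in_cons ms orbT.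
  by move=> x; rewrite in_cons => /orP [/eqP ->|/mmax].
exists a; first by rewrite mem_head.
move=> x; rewrite in_cons => /orP [/eqP ->|/mmax xm] //.
by apply: leq_trans xm (ltnW am).
Qed.

Lemma acycT n (f : {ffun 'I_n.+1 -> 'I_n.+1}) : pok f ->
  ~ exists c : seq 'I_n.+1,
      [/\ uniq c, 3 <= size c & cycle (adj (treeE f)) c].
Proof.
move=> pf [c [uc sc cc]].
have c0 : c != [::] by case: c sc {uc cc}.
have [x0 x0c] : exists x0, x0 \in c by case: c c0 {uc sc cc} => // x c _; exists x; rewrite mem_head.
have [m mc mmax] := max_in x0c.
case: (rot_to mc) => i s' E.
have : uniq (m :: s') by rewrite -E rot_uniq.
have : cycle (adj (treeE f)) (m :: s') by rewrite -E rot_cycle.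
have : 3 <= size (m :: s') by rewrite -E size_rot.
have sub : forall x, x \in m :: s' -> x <= m by move=> x; rewrite -E mem_rot; apply: mmax.
case: s' E sub => [|a s''] E sub; first by [].
case/lastP: s'' E sub => [|t b] E sub; first by [].
move=> _ cyc u.
have : path (adj (treeE f)) m (rcons (a :: rcons t b) m) := cyc.
rewrite rcons_path last_cons last_rcons => /andP [pa bm].
have ma : adj (treeE f) m a by case/andP: pa.
have [mnot ua] := andP u.
have [anot _] := andP ua.
have bin : b \in rcons t b by rewrite mem_rcons mem_head.
have ab : a != b by apply: contraNneq anot => ->.
have am : a != m by apply: contraNneq mnot => <-; rewrite mem_head.
have bm' : b != m by apply: contraNneq mnot => <-; rewrite in_cons bin orbT.
have alt : a < m.
  have := sub a; rewrite in_cons mem_head orbT => /(_ isT).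
  by rewrite leq_eqVlt => /orP [/eqP/val_inj aem|//]; rewrite aem eqxx in am.
have blt : b < m.
  have := sub b; rewrite !in_cons bin !orbT => /(_ isT).
  by rewrite leq_eqVlt => /orP [/eqP/val_inj aem|//]; rewrite aem eqxx in bm'.
move: ma bm; rewrite !adjT //.
case/orP=> [/andP [_ /eqP ea] | /andP [a0 /eqP em]]; last first.
  by have := pokS pf a0; rewrite -em => /(ltn_trans alt); rewrite ltnn.
case/orP=> [/andP [b0 /eqP em] | /andP [_ /eqP eb]].
  by have := pokS pf b0; rewrite -em => /(ltn_trans blt); rewrite ltnn.
by move: ab; rewrite ea eb eqxx.
Qed.

Lemma incr_aux n (f : {ffun 'I_n.+1 -> 'I_n.+1}) : pok f -> forall p y,
  y != ord0 -> path (adj (treeE f)) y p -> uniq (f y :: y :: p) ->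
  path (fun a b : 'I_n.+1 => a < b) y p.
Proof.
move=> pf; elim=> // z p IH y y0 /andP [yz pz] u.
move: yz; rewrite adjT // => /orP [/andP [_ /eqP ez] | /andP [z0 /eqP ey]].
  by move: u; rewrite ez /= !inE eqxx !orbT.
rewrite /= IH // ?andbT; first by rewrite ey pokS.
by move: u; rewrite ey /= => /andP [_ ->].
Qed.

Lemma treeE_incr n (f : {ffun 'I_n.+1 -> 'I_n.+1}) : pok f -> increasing_tree (treeE f).
Proof.
move=> pf; split; first split.
- move=> e /imsetP [v]; rewrite in_ground => v0 ->.
  rewrite cards2; apply/eqP; rewrite eqSS eqb1.
  by apply/eqP => E; have := pokS pf v0; rewrite -E ltnn.
- move=> x y; apply: (connect_trans (y := ord0)); last exact: connT.
  by rewrite (sym_connect_sym (adj_sym _)); exact: connT.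
- exact: acycT.
case=> // z p /andP [oz pz] u.
move: oz; rewrite adjT // => /orP [/andP [] | /andP [z0 /eqP ez]]; first by rewrite eqxx.
rewrite /= -ordneq0 z0 /=.
apply: (incr_aux pf) => //.
by rewrite -ez.
Qed.

Definition parT n (E : {set {set 'I_n.+1}}) : {ffun 'I_n.+1 -> 'I_n.+1} :=
  [ffun v => if v == ord0 then ord0 else odflt ord0 [pick u | adj E u v && (u < v)]].

Lemma parT_pok n (E : {set {set 'I_n.+1}}) : pok (parT E).
Proof.
apply/forallP => v; rewrite ffunE; case: (eqVneq v ord0) => // v0.
case: pickP => [u /andP [_ //] | _] /=.
by rewrite -ordneq0.
Qed.

Lemma treeE_parT n (f : {ffun 'I_n.+1 -> 'I_n.+1}) : pok f -> parT (treeE f) = f.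
Proof.
move=> pf; apply/ffunP => v; rewrite ffunE.
case: (eqVneq v ord0) => [->|v0]; first by rewrite pok0.
case: pickP => [u /andP [] | /(_ (f v))]; last first.
  by rewrite adjT // v0 eqxx orbT pokS.
rewrite adjT // => /orP [/andP [u0 /eqP ev] | /andP [_ /eqP ->] //] uv.
by have := pokS pf u0; rewrite -ev => /(ltn_trans uv); rewrite ltnn.
Qed.

Lemma le_last n (s : seq 'I_n.+1) x y :
  sorted (fun a b : 'I_n.+1 => a < b) (x :: s) -> y \in x :: s -> y <= last x s.
Proof.
elim: s x y => [|z s IH] x y /=; first by rewrite inE => _ /eqP ->.
case/andP=> xz pz; rewrite in_cons => /orP [/eqP ->|ys]; last exact: IH.
by apply: leq_trans (ltnW xz) (IH z z pz (mem_head _ _)).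
Qed.

Lemma spath n (E : {set {set 'I_n.+1}}) v : increasing_tree E ->
  exists p, [/\ path (adj E) ord0 p, uniq (ord0 :: p), last ord0 p = v &
               sorted (fun a b : 'I_n.+1 => a < b) (ord0 :: p)].
Proof.
case=> [[_ conn _] inc]; have := conn ord0 v.
case/connectP => p pp ->; case: (shortenP pp) => p' pp' u' _.
by exists p'; split => //; apply: inc.
Qed.

Lemma lowP n (E : {set {set 'I_n.+1}}) v : increasing_tree E -> v != ord0 ->
  exists2 u, adj E u v & u < v.
Proof.
move=> it v0; have [p [pp u lp sp]] := spath v it.
case/lastP: p pp u lp sp => [|q w] pp u lp sp; first by rewrite -lp eqxx in v0.
rewrite last_rcons in lp; subst w.
exists (last ord0 q); first by move: pp; rewrite rcons_path => /andP [].
by move: sp; rewrite /sorted rcons_path => /andP [].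
Qed.

Lemma lowU_aux n (E : {set {set 'I_n.+1}}) v u1 u2 : increasing_tree E ->
  adj E u1 v -> u1 < v -> adj E u2 v -> u2 < v -> u2 <= u1.
Proof.
move=> it a1 l1 a2 l2; have [p [pp u lp sp]] := spath u1 it.
case: (boolP (u2 \in ord0 :: p)) => [inp | nin].
  by rewrite -lp; apply: le_last sp inp.
have vnin : v \notin ord0 :: p.
  apply/negP => /(le_last sp); rewrite lp => vu.
  by have := leq_trans l1 vu; rewrite ltnn.
have P2 : path (adj E) ord0 (rcons (rcons p v) u2).
  by rewrite !rcons_path last_rcons pp lp a1 adj_sym a2.
have U2 : uniq (rcons (rcons (ord0 :: p) v) u2).
  rewrite !rcons_uniq u vnin mem_rcons in_cons negb_or nin !andbT.
  by apply/eqP => e; move: l2; rewrite e ltnn.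
have := (proj2 it) _ P2 U2.
rewrite /sorted rcons_path last_rcons => /andP [_].
by rewrite ltnNge ltnW.
Qed.

Lemma lowU n (E : {set {set 'I_n.+1}}) v u1 u2 : increasing_tree E ->
  adj E u1 v -> u1 < v -> adj E u2 v -> u2 < v -> u1 = u2.
Proof.
move=> it a1 l1 a2 l2; apply: val_inj; apply/eqP; rewrite eqn_leq.
by rewrite (lowU_aux it a1 l1 a2 l2) (lowU_aux it a2 l2 a1 l1).
Qed.

Lemma parT_spec n (E : {set {set 'I_n.+1}}) v : increasing_tree E -> v != ord0 ->
  adj E (parT E v) v /\ parT E v < v.
Proof.
move=> it v0; rewrite ffunE (negbTE v0).
case: pickP => [u /andP [] //| none].
have [u a l] := lowP it v0.
by have := none u; rewrite a l.
Qed.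

Lemma parT_treeE n (E : {set {set 'I_n.+1}}) : increasing_tree E -> treeE (parT E) = E.
Proof.
move=> it; apply/setP => e; apply/imsetP/idP.
- case=> v; rewrite in_ground => v0 ->.
  have [/andP [_ a] _] := parT_spec it v0.
  by rewrite setUC.
- move=> eE; have [[c2 _ _] _] := it.
  have /cards2P [x [y [xy ee]]] : #|e| == 2 by rewrite c2.
  have axy : adj E x y by rewrite /adj xy -ee.
  have ayx : adj E y x by rewrite adj_sym.
  case: (ltngtP x y) => [lt|lt|eq]; last by rewrite (val_inj eq) eqxx in xy.
  + have y0 : y != ord0 by rewrite ordneq0; apply: leq_ltn_trans lt.
    have [a l] := parT_spec it y0.
    exists y; first by rewrite in_ground.
    by rewrite ee (lowU it a l axy lt) setUC.
  + have x0 : x != ord0 by rewrite ordneq0; apply: leq_ltn_trans lt.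
    have [a l] := parT_spec it x0.
    exists x; first by rewrite in_ground.
    by rewrite ee (lowU it a l ayx lt).
Qed.

Definition kids n (f : {ffun 'I_n.+1 -> 'I_n.+1}) (j : 'I_n.+1) : {set 'I_n.+1} :=
  [set i | (i != ord0) && (f i == j)].
Definition blk n (f : {ffun 'I_n.+1 -> 'I_n.+1}) (j : 'I_n.+1) := j |: kids f j.
Definition okj n (f : {ffun 'I_n.+1 -> 'I_n.+1}) (j : 'I_n.+1) :=
  (j != ord0) && ((kids f j != set0) || (f j == ord0)).
Definition lpE n (f : {ffun 'I_n.+1 -> 'I_n.+1}) : {set {set 'I_n.+1}} :=
  [set blk f j | j in [set j | okj f j]].
Definition parP n (P : {set {set 'I_n.+1}}) : {ffun 'I_n.+1 -> 'I_n.+1} :=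
  [ffun i => odflt ord0 [pick j | [exists B in P, (i \in B) && is_min B j && (j != i)]]].

Lemma in_kids n (f : {ffun 'I_n.+1 -> 'I_n.+1}) j i :
  (i \in kids f j) = (i != ord0) && (f i == j).
Proof. by rewrite inE. Qed.

Lemma in_blk n (f : {ffun 'I_n.+1 -> 'I_n.+1}) j i :
  (i \in blk f j) = (i == j) || (i \in kids f j).
Proof. by rewrite /blk in_setU1. Qed.

Lemma is_min_blk n (f : {ffun 'I_n.+1 -> 'I_n.+1}) j x : pok f ->
  is_min (blk f j) x = (x == j).
Proof.
move=> pf; rewrite /is_min; case: (eqVneq x j) => [->|xj].
  rewrite in_blk eqxx /=; apply/forall_inP => y; rewrite in_blk.
  case/orP => [/eqP -> //| ]; rewrite in_kids => /andP [y0 /eqP <-].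
  exact: ltnW (pokS pf y0).
rewrite in_blk (negbTE xj) in_kids /=.
case: (boolP ((x != ord0) && (f x == j))) => //= /andP [x0 /eqP fx].
apply/negbTE/negP => /forall_inP /(_ j); rewrite in_blk eqxx => /(_ isT).
by rewrite -fx leqNgt pokS.
Qed.

Lemma nd_half n (f : {ffun 'I_n.+1 -> 'I_n.+1}) j k : pok f -> okj f j ->
  k != ord0 -> j != k -> f j = k ->
  is_min (blk f j) j && (1 < #|blk f j|) && ~~ is_min (blk f k) j.
Proof.
move=> pf /andP [j0 oj] k0 jk fj.
rewrite !is_min_blk // eqxx jk andbT /=.
move: oj; rewrite fj (negbTE k0) orbF => /set0Pn [y yk].
apply/card_gt1P; exists j, y; split; rewrite ?in_blk ?eqxx ?yk ?orbT //.
move: yk; rewrite in_kids => /andP [y0 /eqP fy].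
by apply/eqP => e; have := pokS pf y0; rewrite fy -e ltnn.
Qed.

Lemma lpE_lp n (f : {ffun 'I_n.+1 -> 'I_n.+1}) : pok f -> linked_partition (lpE f).
Proof.
move=> pf; split.
- move=> B /imsetP [j]; rewrite inE => /andP [j0 _] ->; split.
    by apply/set0Pn; exists j; rewrite in_blk eqxx.
  apply/subsetP => x; rewrite in_blk in_ground in_kids.
  by case/orP => [/eqP -> //| /andP []].
- apply/setP => x; apply/bigcupP/idP.
    case=> B /imsetP [j]; rewrite inE => /andP [j0 _] -> .
    by rewrite in_blk in_ground in_kids => /orP [/eqP -> //| /andP []].
  rewrite in_ground => x0.
  case: (eqVneq (f x) ord0) => fx.
    exists (blk f x); last by rewrite in_blk eqxx.
    by apply/imsetP; exists x => //; rewrite inE /okj x0 fx eqxx orbT.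
  exists (blk f (f x)); last by rewrite in_blk in_kids x0 eqxx orbT.
  apply/imsetP; exists (f x) => //; rewrite inE /okj fx /=.
  by apply/orP; left; apply/set0Pn; exists x; rewrite in_kids x0 eqxx.
- move=> B C /imsetP [j]; rewrite inE => oj -> /imsetP [k]; rewrite inE => ok -> bc.
  have jk : j != k by apply: contraNneq bc => ->.
  have [j0 _] := andP oj; have [k0 _] := andP ok.
  apply/forall_inP => x /setIP [].
  rewrite !in_blk !in_kids.
  case/orP => [/eqP -> | /andP [x0 /eqP fxj]]; case/orP => [/eqP e | /andP [x0' /eqP fxk]].
  + by rewrite e eqxx in jk.
  + by rewrite nd_half.
  + by subst x; rewrite orbC nd_half // eq_sym.
  + by rewrite -fxj fxk eqxx in jk.
Qed.

Lemma parP_lpE n (f : {ffun 'I_n.+1 -> 'I_n.+1}) : pok f -> parP (lpE f) = f.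
Proof.
move=> pf; apply/ffunP => i; rewrite ffunE.
case: pickP => [j /exists_inP [B /imsetP [k _ ->]] | none] /=.
  rewrite is_min_blk // => /andP [/andP [iB /eqP ->] ji].
  by move: iB; rewrite in_blk in_kids eq_sym (negbTE ji) /= => /andP [_ /eqP ->].
case: (eqVneq (f i) ord0) => [-> //| fi0].
have i0 : i != ord0 by apply: contraNneq fi0 => ->; rewrite pok0.
suff H : [exists B in lpE f, (i \in B) && is_min B (f i) && (f i != i)].
  by move: (none (f i)); rewrite H.
apply/exists_inP; exists (blk f (f i)).
  apply/imsetP; exists (f i) => //; rewrite inE /okj fi0 /=.
  by apply/orP; left; apply/set0Pn; exists i; rewrite in_kids i0 eqxx.
rewrite in_blk in_kids i0 eqxx orbT is_min_blk // eqxx /=.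
by apply/eqP => e; have := pokS pf i0; rewrite e ltnn.
Qed.

Lemma min_uniq m (E : {set 'I_m}) x y : is_min E x -> is_min E y -> x = y.
Proof.
case/andP=> xE /forall_inP hx /andP [yE /forall_inP hy].
by apply: val_inj; apply/eqP; rewrite eqn_leq hx // hy.
Qed.

Lemma min_in m (E : {set 'I_m}) x : is_min E x -> x \in E.
Proof. by case/andP. Qed.

Lemma min_ex m (E : {set 'I_m}) : E != set0 -> exists x, is_min E x.
Proof.
case/set0Pn => x0 x0E.
have [y yE ymin] := @arg_minnP _ x0 (mem E) (fun i : 'I_m => val i) x0E.
by exists y; apply/andP; split => //; apply/forall_inP => z zE; apply: ymin.
Qed.

Lemma nd_use m (B C : {set 'I_m}) x : nearly_disjoint B C -> x \in B -> x \in C ->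
  (is_min B x && (1 < #|B|) && ~~ is_min C x)
  || (is_min C x && (1 < #|C|) && ~~ is_min B x).
Proof. by move=> /forall_inP H xB xC; apply: H; rewrite inE xB. Qed.

Lemma L3 n (P : {set {set 'I_n.+1}}) B x m : linked_partition P ->
  B \in P -> x \in B -> is_min B m -> x != m -> parP P x = m.
Proof.
case=> _ _ nd BP xB mB xm; rewrite ffunE.
case: pickP => [j /exists_inP [B' B'P /andP [/andP [xB' jB'] jx]] | none] /=.
  case: (eqVneq B' B) => [e|ne]; first by subst B'; apply: min_uniq jB' mB.
  have := nd_use (nd _ _ B'P BP ne) xB' xB.
  have -> : is_min B' x = false.
    by apply/negbTE; apply: contra jx => /(min_uniq jB') ->.
  have -> : is_min B x = false.
    by apply/negbTE; apply: contra xm => /(min_uniq mB) ->.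
  by [].
suff H : [exists B in P, (x \in B) && is_min B m && (m != x)].
  by move: (none m); rewrite H.
by apply/exists_inP; exists B => //; rewrite xB mB eq_sym xm.
Qed.

Lemma L3' n (P : {set {set 'I_n.+1}}) x : parP P x != ord0 ->
  exists B, [/\ B \in P, x \in B, is_min B (parP P x) & parP P x != x].
Proof.
rewrite ffunE; case: pickP => [j /exists_inP [B BP /andP [/andP [xB jB] jx]] | none] //= _.
by exists B.
Qed.

Lemma L4 n (P : {set {set 'I_n.+1}}) B m : linked_partition P ->
  B \in P -> is_min B m -> B = blk (parP P) m.
Proof.
move=> lp BP mB; have [sub _ nd] := lp.
have Bg : forall y, y \in B -> y != ord0.
  by move=> y yB; have [_ /subsetP s] := sub B BP; rewrite -in_ground s.
apply/setP => y; rewrite in_blk in_kids; apply/idP/idP.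
  move=> yB; case: (eqVneq y m) => // ym /=.
  by rewrite Bg //= (L3 lp BP yB mB ym) eqxx.
case/orP => [/eqP -> | /andP [y0 /eqP gy]]; first exact: min_in mB.
have m0 : m != ord0 by apply: Bg; apply: min_in mB.
have := m0; rewrite -gy => /L3' [B' [B'P yB' mB' _]].
rewrite gy in mB'; case: (eqVneq B' B) => [<- //|ne].
have := nd_use (nd _ _ B'P BP ne) (min_in mB') (min_in mB).
by rewrite mB mB' !andbF.
Qed.

Lemma inP_ground n (P : {set {set 'I_n.+1}}) B y : linked_partition P ->
  B \in P -> y \in B -> y != ord0.
Proof.
by case=> sub _ _ BP yB; have [_ /subsetP s] := sub B BP; rewrite -in_ground s.
Qed.

Lemma L5 n (P : {set {set 'I_n.+1}}) B m : linked_partition P ->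
  B \in P -> is_min B m -> okj (parP P) m.
Proof.
move=> lp BP mB; have [sub _ nd] := lp.
rewrite /okj (inP_ground lp BP (min_in mB)) /=.
case: (ltnP 1 #|B|) => [/card_gt1P [x [y [xB yB xy]]] | le1].
  apply/orP; left; apply/set0Pn.
  case: (eqVneq x m) => [exm|xm].
    subst x; exists y; rewrite in_kids (inP_ground lp BP yB) /=.
    by rewrite (L3 lp BP yB mB) // eq_sym.
  by exists x; rewrite in_kids (inP_ground lp BP xB) /= (L3 lp BP xB mB xm).
apply/orP; right; apply/negPn/negP => /L3' [B' [B'P mB' gB' gm]].
case: (eqVneq B' B) => [e|ne].
  by subst B'; move: gm; rewrite (min_uniq gB' mB) eqxx.
have neB : B != B' by rewrite eq_sym.
have := nd_use (nd _ _ BP B'P neB) (min_in mB) mB'.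
rewrite mB ltnNge le1 /=.
by have -> : is_min B' m = false by apply/negbTE; apply: contra gm => /(min_uniq gB') ->.
Qed.

Lemma parP_pok n (P : {set {set 'I_n.+1}}) : linked_partition P -> pok (parP P).
Proof.
move=> lp; apply/forallP => i; rewrite ffunE.
case: pickP => [j /exists_inP [B BP /andP [/andP [iB jB] ji]] | _] /=.
  case: (eqVneq i ord0) => [e|i0]; first by subst i; have := inP_ground lp BP iB; rewrite eqxx.
  have [_ /forall_inP H] := andP jB.
  by rewrite ltn_neqAle H // andbT; apply: contra ji => /eqP /val_inj ->.
by case: (eqVneq i ord0) => //; rewrite ordneq0.
Qed.

Lemma lpE_parP n (P : {set {set 'I_n.+1}}) : linked_partition P -> lpE (parP P) = P.
Proof.
move=> lp; have [sub cov nd] := lp.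
apply/setP => B; apply/imsetP/idP.
- case=> j; rewrite inE => /andP [j0 oj] ->; case/orP: oj => [/set0Pn [y] | /eqP gj].
    rewrite in_kids => /andP [y0 /eqP gy].
    have gy0 : parP P y != ord0 by rewrite gy.
    have [B' [B'P _ mB' _]] := L3' gy0.
    by rewrite gy in mB'; rewrite -(L4 lp B'P mB').
  have : j \in ground n by rewrite in_ground.
  rewrite -cov => /bigcupP [B' B'P jB'].
  have [m mB'] := min_ex (proj1 (sub _ B'P)).
  case: (eqVneq j m) => [e|jm].
    by subst m; rewrite -(L4 lp B'P mB').
  have := L3 lp B'P jB' mB' jm; rewrite gj => e.
  by have := inP_ground lp B'P (min_in mB'); rewrite -e eqxx.
- move=> BP; have [m mB] := min_ex (proj1 (sub _ BP)).
  exists m; last exact: L4 lp BP mB.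
  by rewrite inE; apply: L5 lp BP mB.
Qed.

Theorem theorem3p2 (n : nat) (hn : 1 <= n) :
  exists f : {P : {set {set 'I_n.+1}} | linked_partition P} ->
             {E : {set {set 'I_n.+1}} | increasing_tree E},
    bijective f.
Proof.
pose F (P : {P : {set {set 'I_n.+1}} | linked_partition P}) :
  {E : {set {set 'I_n.+1}} | increasing_tree E} :=
  exist _ (treeE (parP (proj1_sig P))) (treeE_incr (parP_pok (proj2_sig P))).
pose G (E : {E : {set {set 'I_n.+1}} | increasing_tree E}) :
  {P : {set {set 'I_n.+1}} | linked_partition P} :=
  exist _ (lpE (parT (proj1_sig E))) (lpE_lp (parT_pok (proj1_sig E))).
exists F, G.
- case=> P HP; apply: eq_sig_hprop; first by move=> x p q; apply: proof_irrelevance.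
  by rewrite /= treeE_parT ?parP_pok // lpE_parP.
- case=> E HE; apply: eq_sig_hprop; first by move=> x p q; apply: proof_irrelevance.
  by rewrite /= parP_lpE ?parT_pok // parT_treeE.
Qed.
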